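(* Let $f$ be the two-layer network below with scaling $b>0$ and let $R>0$. Let $x_1,\dots,x_T\in\mathbb{S}_p$ and let $\ell_1,\dots,\ell_T:\mathbb{R}^d\to\mathbb{R}$ be convex, differentiable and $L$-Lipschitz, and write $\ell_t(\theta)=\ell_t(f(\theta;x_t))$. Then Algorithm 1 with step sizes $\eta_t=\frac{2Rb}{CL\sqrt m}\,t^{-1/2}$ satisfies $$\sum_{t=1}^T\ell_t(\theta_t)\le\min_{\theta\in B(R)}\sum_{t=1}^T\ell_t(\theta)+\frac{3CLR\sqrt{mT}}{b}+\frac{2CLR^2}{b}T.$$
   Context: Let $p,d\ge1$, $m$ an even positive integer, $b>0$, $C>0$, and $\mathbb{S}_p=\{x\in\mathbb{R}^p:\|x\|_2=1\}$. Let $\sigma:\mathbb{R}\to\mathbb{R}$ be differentiable with $|\sigma'(z)-\sigma'(z')|\le C|z-z'|$ and $|\sigma'(z)|\le C$ for all $z,z'$. Parameters are $\theta=(\theta[1],\dots,\theta[d])\in\mathbb{R}^{d\times m\times p}$, where $\theta[i]\in\mathbb{R}^{m\times p}$ has rows $\theta[i,1]^\top,\dots,\theta[i,m/2]^\top,\bar\theta[i,1]^\top,\dots,\bar\theta[i,m/2]^\top$. The two-layer network is $f(\theta;x)=(f_1(\theta[1];x),\dots,f_d(\theta[d];x))^\top$ with $f_i(\theta[i];x)=\frac1b\big(\sum_{r=1}^{m/2}a_{i,r}\sigma(\theta[i,r]^\top x)+\sum_{r=1}^{m/2}\bar a_{i,r}\sigma(\bar\theta[i,r]^\top x)\big)$,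 where the $a_{i,r}$ are independent uniform signs in $\{\pm1\}$ and $\bar a_{i,r}=-a_{i,r}$, fixed (not trained). The random initialization $\theta_1$ has $\theta_1[i,r]\sim\mathcal N(0,I_p)$ i.i.d. for $r\le m/2$ and $\bar\theta_1[i,r]=\theta_1[i,r]$. $B(R)=\{\theta:\|\theta-\theta_1\|_F\le R\}$. Algorithm 1 (OGD for neural networks): start at $\theta_1$; at round $t$ play $\theta_t$, receive $x_t$ and $\ell_t$, and update $\theta_{t+1}=\Pi_{B(R)}(\theta_t-\eta_t\nabla_\theta\ell_t(f(\theta_t;x_t)))$, where $\Pi_{B(R)}$ is Frobenius-norm projection onto $B(R)$. *)

(* Defs.v *)
From HB Require Import structures.
From mathcomp Require Import all_boot all_order all_algebra.
From mathcomp Require Import all_classical all_reals all_analysis.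
Set Implicit Arguments. Unset Strict Implicit. Unset Printing Implicit Defensive.
Import Order.TTheory GRing.Theory Num.Theory.
Import numFieldNormedType.Exports.
Local Open Scope ring_scope.

(* Parameters theta in R^{d x m x p}: theta i r k = k-th coordinate of the
   r-th row of theta[i].  Rows r < m/2 are theta[i,r], rows m/2 + r are
   bar-theta[i,r]. *)
Definition param (R : realType) (d m p : nat) := 'I_d -> 'I_m -> 'I_p -> R.

Definition eucl (R : realType) (d : nat) (y : 'rV[R]_d) : R :=
  Num.sqrt (\sum_(i < d) (y ord0 i) ^+ 2).

Definition frob (R : realType) (d m p : nat) (th : param R d m p) : R :=
  Num.sqrt (\sum_(i < d) \sum_(r < m) \sum_(k < p) (th i r k) ^+ 2).

Definition psub (R : realType) (d m p : nat) (th th' : param R d m p)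
  : param R d m p := fun i r k => th i r k - th' i r k.

Definition pstep (R : realType) (d m p : nat) (th : param R d m p) (eta : R)
  (g : param R d m p) : param R d m p := fun i r k => th i r k - eta * g i r k.

Definition inBall (R : realType) (d m p : nat) (th1 : param R d m p) (Rad : R)
  (th : param R d m p) : Prop := frob (psub th th1) <= Rad.

Definition is_proj (R : realType) (d m p : nat) (th1 : param R d m p) (Rad : R)
  (y q : param R d m p) : Prop :=
  inBall th1 Rad q /\
  forall z, inBall th1 Rad z -> frob (psub y q) <= frob (psub y z).

(* The two-layer network f(theta; x) in R^d.  The sign a i r for r >= m/2 is
   bar-a = - a (enforced by hypothesis in the theorem). *)
Definition net (R : realType) (d m p : nat) (sigma : R -> R) (b : R)
  (a : 'I_d -> 'I_m -> R) (th : param R d m p) (x : 'I_p -> R) : 'rV[R]_d :=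
  \row_(i < d) (b^-1 * \sum_(r < m) a i r * sigma (\sum_(k < p) th i r k * x k)).

Definition pupd (R : realType) (d m p : nat) (th : param R d m p)
  (i : 'I_d) (r : 'I_m) (k : 'I_p) (s : R) : param R d m p :=
  fun i' r' k' => if (i' == i) && (r' == r) && (k' == k)
                  then th i' r' k' + s else th i' r' k'.

Definition pgrad (R : realType) (d m p : nat) (F : param R d m p -> R)
  (th : param R d m p) : param R d m p :=
  fun i r k => derive1 (fun s => F (pupd th i r k s)) 0.

Definition convex_fun (R : realType) (d : nat) (l : 'rV[R]_d -> R) : Prop :=
  forall (y1 y2 : 'rV[R]_d) (t : R), 0 <= t <= 1 ->
    l (t *: y1 + (1 - t) *: y2) <= t * l y1 + (1 - t) * l y2.

Definition lipschitz_eucl (R : realType) (d : nat) (L : R) (l : 'rV[R]_d -> R)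
  : Prop := forall y1 y2 : 'rV[R]_d, `|l y1 - l y2| <= L * eucl (y1 - y2).

(* Main.v *)
Require Import Defs.
From HB Require Import structures.
From mathcomp Require Import all_boot all_order all_algebra.
From mathcomp Require Import all_classical all_reals all_analysis.
Import Order.TTheory GRing.Theory Num.Theory.
Import numFieldNormedType.Exports.
Local Open Scope ring_scope.
From mathcomp Require Import ring lra.
Set Implicit Arguments. Unset Strict Implicit. Unset Printing Implicit Defensive.
Definition S3 (R : realType) (d m p : nat) (F : 'I_d -> 'I_m -> 'I_p -> R) : R :=
  \sum_(i < d) \sum_(r < m) \sum_(k < p) F i r k.

Lemma S3D (R : realType) (d m p : nat) (F G : 'I_d -> 'I_m -> 'I_p -> R) :
  S3 (fun i r k => F i r k + G i r k) = S3 F + S3 G.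
Proof.
rewrite /S3 -big_split /=; apply: eq_bigr => i _.
rewrite -big_split /=; apply: eq_bigr => r _; by rewrite -big_split.
Qed.

Lemma S3Z (R : realType) (d m p : nat) (c : R) (F : 'I_d -> 'I_m -> 'I_p -> R) :
  S3 (fun i r k => c * F i r k) = c * S3 F.
Proof.
rewrite /S3 mulr_sumr; apply: eq_bigr => i _.
rewrite mulr_sumr; apply: eq_bigr => r _; by rewrite mulr_sumr.
Qed.

Lemma S3_le (R : realType) (d m p : nat) (F G : 'I_d -> 'I_m -> 'I_p -> R) :
  (forall i r k, F i r k <= G i r k) -> S3 F <= S3 G.
Proof.
move=> H; rewrite /S3; apply: ler_sum => i _; apply: ler_sum => r _.
by apply: ler_sum => k _.
Qed.

Lemma S3_ext (R : realType) (d m p : nat) (F G : 'I_d -> 'I_m -> 'I_p -> R) :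
  (forall i r k, F i r k = G i r k) -> S3 F = S3 G.
Proof.
move=> H; rewrite /S3; apply: eq_bigr => i _; apply: eq_bigr => r _.
by apply: eq_bigr => k _.
Qed.

Lemma S3_ge0 (R : realType) (d m p : nat) (F : 'I_d -> 'I_m -> 'I_p -> R) :
  (forall i r k, 0 <= F i r k) -> 0 <= S3 F.
Proof.
move=> H; rewrite /S3; apply: sumr_ge0 => i _; apply: sumr_ge0 => r _.
by apply: sumr_ge0 => k _.
Qed.

Definition NN (R : realType) (d m p : nat) (F : param R d m p) : R :=
  S3 (fun i r k => F i r k ^+ 2).

Lemma NN_ge0 (R : realType) (d m p : nat) (F : param R d m p) : 0 <= NN F.
Proof. by apply: S3_ge0 => i r k; apply: sqr_ge0. Qed.

Lemma frobE (R : realType) (d m p : nat) (F : param R d m p) :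
  frob F = Num.sqrt (NN F).
Proof. by []. Qed.

Lemma frob_le (R : realType) (d m p : nat) (F G : param R d m p) :
  (frob F <= frob G) = (NN F <= NN G).
Proof. by rewrite !frobE ler_sqrt // NN_ge0. Qed.

Lemma frob_le_rad (R : realType) (d m p : nat) (F : param R d m p) (Rad : R) :
  0 <= Rad -> (frob F <= Rad) = (NN F <= Rad ^+ 2).
Proof.
move=> H; by rewrite -[in RHS](ler_sqrt (NN F)) ?sqr_ge0 // sqrtr_sqr ger0_norm.
Qed.

Lemma small_s (R : realType) (a b : R) :
  0 <= b -> (forall s, 0 < s -> s <= 1 -> 2 * a <= s * b) -> a <= 0.
Proof.
move=> b0 H; rewrite leNgt; apply/negP => a0.
have apb : 0 < a + b by lra.
have s0 : 0 < a / (a + b) by rewrite divr_gt0.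
have s1 : a / (a + b) <= 1 by rewrite ler_pdivrMr // mul1r; lra.
have := H _ s0 s1.
have : a / (a + b) * b <= a by rewrite mulrAC ler_pdivrMr //; nra.
lra.
Qed.

Lemma proj_nonexp (R : realType) (d m p : nat) (th1 : param R d m p) (Rad : R)
  (y q z : param R d m p) :
  0 < Rad -> is_proj th1 Rad y q -> inBall th1 Rad z ->
  NN (psub q z) <= NN (psub y z).
Proof.
move=> R0 [qB qmin] zB; have R0' := ltW R0.
move: (qB) (zB); rewrite /inBall !frob_le_rad // => qB' zB'.
pose ip := S3 (fun i r k => (y i r k - q i r k) * (z i r k - q i r k)).
have key : ip <= 0.
  apply: (@small_s _ _ (NN (psub z q))); first exact: NN_ge0.
  move=> s s0 s1.
  pose w : param R d m p := fun i r k => q i r k + s * (z i r k - q i r k).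
  have wB : inBall th1 Rad w.
    rewrite /inBall frob_le_rad //.
    apply: le_trans (_ : (1 - s) * NN (psub q th1) + s * NN (psub z th1) <= _).
      rewrite /NN -!S3Z -S3D; apply: S3_le => i r k; rewrite /psub /w.
      set A := q i r k - th1 i r k; set B := z i r k - th1 i r k.
      have -> : q i r k + s * (z i r k - q i r k) - th1 i r k = (1 - s) * A + s * B.
        by rewrite /A /B; ring.
      have : 0 <= s * (1 - s) * (A - B) ^+ 2.
        by apply: mulr_ge0; [apply: mulr_ge0; lra|apply: sqr_ge0].
      move=> h; apply: (le_trans (y := (1 - s) * A ^+ 2 + s * B ^+ 2 - s * (1 - s) * (A - B) ^+ 2)); last lra.
      by rewrite le_eqVlt; apply/orP; left; apply/eqP; ring.
    apply: le_trans (_ : (1 - s) * Rad ^+ 2 + s * Rad ^+ 2 <= _); last by rewrite le_eqVlt; apply/orP; left; apply/eqP; ring.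
    apply: lerD; apply: ler_wpM2l => //; lra.
  have := qmin w wB; rewrite frob_le /NN /psub /w.
  have -> : S3 (fun i r k => (y i r k - (q i r k + s * (z i r k - q i r k))) ^+ 2) =
    S3 (fun i r k => (y i r k - q i r k) ^+ 2) + (- (2 * s)) * ip +
      s ^+ 2 * S3 (fun i r k => (z i r k - q i r k) ^+ 2).
    rewrite /ip -!S3Z -!S3D; apply: S3_ext => i r k; ring.
  rewrite expr2; nra.
have -> : NN (psub y z) = NN (psub y q) + (- 2) * ip + NN (psub q z).
  rewrite /NN /ip /psub -!S3Z -!S3D; apply: S3_ext => i r k; ring.
have := NN_ge0 (psub y q); lra.
Qed.
Lemma is_derive_ext1 (R : realType) (f g : R -> R) (x df dg : R) :
  is_derive x 1 f df -> (forall z, f z = g z) -> df = dg -> is_derive x 1 g dg.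
Proof. by move=> [H1 H2] /funext E <-; rewrite -E; split. Qed.

Lemma is_deriveB1 (R : realType) (f g : R -> R) (x a b : R) :
  is_derive x 1 f a -> is_derive x 1 g b -> is_derive x 1 (fun z => f z - g z) (a - b).
Proof.
move=> Hf Hg; have [H1 H2] := @is_deriveB _ _ _ f g x 1 a b Hf Hg.
by split; [exact: H1| rewrite [LHS]H2].
Qed.

Lemma is_derive_lin (R : realType) (A s : R) : is_derive s 1 (fun s : R => s * A) A.
Proof.
have [H1 H2] := is_deriveM (is_derive_id s 1) (is_derive_cst A s 1).
split; first exact: H1.
by rewrite [LHS]H2 /= scaler0 add0r [_%:A]mulr1.
Qed.

Lemma is_derive_sq (R : realType) (B s : R) : is_derive s 1 (fun s : R => s * s * B) (2 * s * B).
Proof.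
have [H1 H2] := is_deriveM (is_deriveM (is_derive_id s 1) (is_derive_id s 1)) (is_derive_cst B s 1).
split; first exact: H1.
rewrite [LHS]H2 /= scaler0 add0r [_%:A]mulr1 /GRing.scale /=; ring.
Qed.

Lemma taylor_half (R : realType) (sigma : R -> R) (C e : R) :
  (forall z : R, derivable sigma z 1) ->
  (forall z z' : R, `|derive1 sigma z - derive1 sigma z'| <= C * `|z - z'|) ->
  e = 1 \/ e = -1 ->
  forall u w : R,
  e * (sigma w - sigma u - derive1 sigma u * (w - u)) <= C / 2 * (w - u) ^+ 2.
Proof.
move=> ds Lip he u w; set h := w - u; set A := derive1 sigma u * h.
set B := e * (C / 2 * h ^+ 2).
have dcomp : forall s : R, is_derive s 1 (fun s => sigma (u + s * h)) (derive1 sigma (u + s * h) * h).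
  move=> s.
  have [H1 H2] := is_deriveD (is_derive_cst u s 1) (is_deriveM (is_derive_id s 1) (is_derive_cst h s 1)).
  have Ha : is_derive s 1 (fun s => u + s * h) h.
    split; first exact: H1.
    by rewrite [LHS]H2 /= scaler0 !add0r [_%:A]mulr1.
  have Hs : is_derive (u + s * h) 1 sigma (derive1 sigma (u + s * h)).
    by split; [exact: ds| rewrite derive1E].
  exact: (@is_derive1_comp _ sigma (fun s => u + s * h) s _ _ Hs Ha).
pose G := fun s : R => sigma (u + s * h) - s * A - s * s * B.
have dG : forall s : R, is_derive s 1 G (derive1 sigma (u + s * h) * h - A - 2 * s * B).
  move=> s; apply: is_deriveB1; [apply: is_deriveB1|];
    try exact (dcomp s); try exact (is_derive_lin A s); try exact (is_derive_sq B s).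
have cG : {within `[0, 1], continuous G}%classic.
  apply: derivable_within_continuous => x _; by case: (dG x).
have [c /[!in_itv] /= /andP[c0 c1] Hc] := MVT ltr01 (fun x _ => dG x) cG.
move: Hc; rewrite /G !mul0r !mul1r addr0 !subr0 mulr1.
have -> : u + h = w by rewrite /h; ring.
move=> Hc.
have key : e * (derive1 sigma (u + c * h) * h - A) <= C * c * h ^+ 2.
  rewrite /A -mulrBl.
  have : `|e * ((derive1 sigma (u + c * h) - derive1 sigma u) * h)| <= C * c * h ^+ 2.
    rewrite !normrM.
    have -> : `|e| = 1 by case: he => ->; rewrite ?normrN normr1.
    rewrite mul1r.
    have := Lip (u + c * h) u; have -> : u + c * h - u = c * h by ring.
    rewrite normrM (gtr0_norm c0) => L1.
    have : `|derive1 sigma (u + c * h) - derive1 sigma u| * `|h| <= C * (c * `|h|) * `|h|.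
      by apply: ler_wpM2r.
    have -> : h ^+ 2 = `|h| ^+ 2 by rewrite real_normK ?num_real.
    rewrite expr2; lra.
  move=> H; apply: le_trans _ H; exact: ler_norm.
have e2 : e * e = 1 by case: he => ->; ring.
have EX : e * (sigma w - sigma u - A) =
    e * (derive1 sigma (u + c * h) * h - A) - c * (C * h ^+ 2) + C / 2 * h ^+ 2.
  have -> : sigma w - sigma u - A = (derive1 sigma (u + c * h) * h - A - 2 * c * B) + B.
    by rewrite -Hc; ring.
  apply/eqP; rewrite -subr_eq0 /B.
  set K := C / 2 * h ^+ 2.
  have -> : C * h ^+ 2 = 2 * K by rewrite /K; field.
  set Y := derive1 sigma (u + c * h) * h - A.
  have -> : e * (Y - 2 * c * (e * K) + e * K) - (e * Y - c * (2 * K) + K) = (e * e - 1) * (K - 2 * c * K) by ring.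
  by rewrite e2 subrr mul0r.
rewrite EX; lra.
Qed.

Lemma taylor (R : realType) (sigma : R -> R) (C : R) :
  (forall z : R, derivable sigma z 1) ->
  (forall z z' : R, `|derive1 sigma z - derive1 sigma z'| <= C * `|z - z'|) ->
  forall u w : R,
  `|sigma w - sigma u - derive1 sigma u * (w - u)| <= C / 2 * (w - u) ^+ 2.
Proof.
move=> ds Lip u w.
have H1 := taylor_half ds Lip (or_introl erefl) u w.
have H2 := taylor_half ds Lip (or_intror erefl) u w.
rewrite ler_norml; apply/andP; split; lra.
Qed.
Lemma sum_isqrt (R : realType) (T : nat) :
  \sum_(1 <= t < T.+1) (Num.sqrt (t%:R : R))^-1 <= 2 * Num.sqrt (T%:R : R).
Proof.
elim: T => [|T IH]; first by rewrite big_geq // sqrtr0 mulr0.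
rewrite big_nat_recr //=.
set a := Num.sqrt (T%:R : R) in IH *; set b := Num.sqrt (T.+1%:R : R).
have a0 : 0 <= a by exact: sqrtr_ge0.
have b0 : 0 < b by rewrite sqrtr_gt0 ltr0n.
have ab : a <= b by rewrite /a /b ler_sqrt // ler_nat.
have e : b ^+ 2 = a ^+ 2 + 1 by rewrite !sqr_sqrtr ?ler0n // -natr1.
have ib : b * b^-1 = 1 by rewrite mulfV // gt_eqF.
have ib0 : 0 < b^-1 by rewrite invr_gt0.
have : 2 * a + b^-1 <= 2 * b.
  have h1 : 2 * a * b + 1 <= 2 * b * b by nra.
  have h2 : (2 * a + b^-1) * b <= 2 * b * b.
    by rewrite mulrDl [b^-1 * b]mulrC ib; nra.
  by rewrite -(ler_pM2r b0).
lra.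
Qed.

Lemma telescope (R : realType) (T : nat) (A : nat -> R) (M : R) :
  (forall t, (1 <= t <= T)%N -> A t <= M) ->
  \sum_(1 <= t < T.+1) (A t - A t.+1) * Num.sqrt (t%:R : R)
    <= M * Num.sqrt (T%:R : R) - A T.+1 * Num.sqrt (T%:R : R).
Proof.
elim: T => [|T IH] HA; first by rewrite big_geq // sqrtr0 !mulr0 subr0.
rewrite big_nat_recr //=.
have IH' := IH (fun t ht => HA t (ltac:(move/andP: ht => [h1 h2]; apply/andP; split => //; exact: leqW))).
have hA : A T.+1 <= M by apply: HA; rewrite leqnn andbT.
have w : Num.sqrt (T%:R : R) <= Num.sqrt (T.+1%:R : R) by rewrite ler_sqrt // ler_nat.
set a := Num.sqrt (T%:R : R) in IH' w *; set b := Num.sqrt (T.+1%:R : R) in w *.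
nra.
Qed.
Lemma dir_bound (R : realType) (d : nat) (l : 'rV[R]_d -> R) (y v : 'rV[R]_d) (M : R) :
  differentiable l y ->
  (forall h : R, 0 < h -> h <= 1 -> h^-1 * (l (h *: v + y) - l y) <= M) ->
  'd l y v <= M.
Proof.
move=> dl H.
have dv : derivable l y v by exact: diff_derivable.
rewrite -deriveE //.
have cv := dv.
rewrite /derive.
set F := (fun h : R => h^-1 *: ((l \o shift y) (h *: v) - l y)) in cv *.
have cr : (F @ 0^'+ --> lim (F @ 0^'))%classic.
  exact: cvg_dnbhs_at_right.
apply: (cvgr_to_le cr).
near=> h.
have h0 : 0 < h by near: h; exact: nbhs_right_gt.
have h1 : h <= 1 by near: h; exact: nbhs_right_le.
rewrite /F /=; exact: H.
Unshelve. all: by end_near.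
Qed.

Lemma conv_grad (R : realType) (d : nat) (l : 'rV[R]_d -> R) (y z : 'rV[R]_d) :
  convex_fun l -> differentiable l y -> 'd l y (z - y) <= l z - l y.
Proof.
move=> cl dl; apply: dir_bound => // h h0 h1.
have -> : h *: (z - y) + y = h *: z + (1 - h) *: y.
  by apply/rowP => j; rewrite !mxE; ring.
have := cl z y h; rewrite ltW //= h1 => /(_ isT) H.
rewrite ler_pdivrMl //; nra.
Qed.

Lemma eucl_scale (R : realType) (d : nat) (h : R) (v : 'rV[R]_d) :
  0 <= h -> eucl (h *: v) = h * eucl v.
Proof.
move=> h0; rewrite /eucl.
have -> : \sum_(i < d) (h *: v) ord0 i ^+ 2 = h ^+ 2 * \sum_(i < d) v ord0 i ^+ 2.
  by rewrite mulr_sumr; apply: eq_bigr => i _; rewrite mxE exprMn.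
by rewrite sqrtrM ?sqr_ge0 // sqrtr_sqr ger0_norm.
Qed.

Lemma lip_grad (R : realType) (d : nat) (L : R) (l : 'rV[R]_d -> R) (y v : 'rV[R]_d) :
  lipschitz_eucl L l -> differentiable l y -> 'd l y v <= L * eucl v.
Proof.
move=> ll dl; apply: dir_bound => // h h0 h1.
have := ll (h *: v + y) y; rewrite addrK (eucl_scale _ (ltW h0)) => H.
rewrite ler_pdivrMl //.
apply: le_trans (ler_norm _) _; apply: le_trans H _; lra.
Qed.
Lemma net_pupd (R : realType) (d m p : nat) (sigma : R -> R) (b : R)
  (a : 'I_d -> 'I_m -> R) (th : param R d m p) (x : 'I_p -> R) i r k s :
  net sigma b a (pupd th i r k s) x =
  (b^-1 * (a i r * (sigma (\sum_(k' < p) th i r k' * x k' + s * x k)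
                    - sigma (\sum_(k' < p) th i r k' * x k')))) *: delta_mx 0 i
  + net sigma b a th x.
Proof.
apply/rowP => j; rewrite !mxE /pupd.
have [->|ji] := eqVneq j i; last first.
  by rewrite /= ?andbF mulr0 add0r.
rewrite eqxx /= mulr1 -mulrDr; congr (_ * _).
rewrite (bigD1 r) //= [in RHS](bigD1 r) //= eqxx /=.
have -> : \sum_(k' < p) (if k' == k then th i r k' + s else th i r k') * x k'
   = \sum_(k' < p) th i r k' * x k' + s * x k.
  rewrite (bigD1 k) //= eqxx [in RHS](bigD1 k) //=.
  have -> : \sum_(k' < p | k' != k) (if k' == k then th i r k' + s else th i r k') * x k'
     = \sum_(k' < p | k' != k) th i r k' * x k'.
    by apply: eq_bigr => k' /negPf ->.
  ring.
have -> : \sum_(r' < m | r' != r) a i r' * sigma (\sum_(k' < p)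
          (if (r' == r) && (k' == k) then th i r' k' + s else th i r' k') * x k')
   = \sum_(r' < m | r' != r) a i r' * sigma (\sum_(k' < p) th i r' k' * x k').
  by apply: eq_bigr => r' /negPf ->.
ring.
Qed.
Lemma is_deriveZ1 (R : realType) (f : R -> R) (x a c : R) :
  is_derive x 1 f a -> is_derive x 1 (fun z => c * f z) (c * a).
Proof.
move=> Hf; have [H1 H2] := @is_deriveZ _ _ _ f c x 1 a Hf.
by split; [exact: H1| rewrite [LHS]H2].
Qed.

Lemma is_derive_sig (R : realType) (sigma : R -> R) (u h s : R) :
  (forall z : R, derivable sigma z 1) ->
  is_derive s 1 (fun s => sigma (u + s * h)) (derive1 sigma (u + s * h) * h).
Proof.
move=> ds.
have [H1 H2] := is_deriveD (is_derive_cst u s 1) (is_deriveM (is_derive_id s 1) (is_derive_cst h s 1)).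
have Ha : is_derive s 1 (fun s => u + s * h) h.
  split; first exact: H1.
  by rewrite [LHS]H2 /= scaler0 !add0r [_%:A]mulr1.
have Hs : is_derive (u + s * h) 1 sigma (derive1 sigma (u + s * h)).
  by split; [exact: ds| rewrite derive1E].
exact: (@is_derive1_comp _ sigma (fun s => u + s * h) s _ _ Hs Ha).
Qed.

Lemma pgrad_formula (R : realType) (d m p : nat) (sigma : R -> R) (b : R)
  (a : 'I_d -> 'I_m -> R) (l : 'rV[R]_d -> R) (th : param R d m p) (x : 'I_p -> R) i r k :
  (forall z : R, derivable sigma z 1) ->
  differentiable l (net sigma b a th x) ->
  pgrad (fun th' => l (net sigma b a th' x)) th i r k =
  'd l (net sigma b a th x) (delta_mx 0 i) *
    (b^-1 * (a i r * (derive1 sigma (\sum_(k' < p) th i r k' * x k') * x k))).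
Proof.
move=> ds dl.
set y := net sigma b a th x; set u := \sum_(k' < p) th i r k' * x k'.
set e : 'rV[R]_d := delta_mx 0 i.
pose H := fun s : R => b^-1 * (a i r * (sigma (u + s * x k) - sigma u)).
pose phi := fun t : R => l (t *: e + y).
rewrite /pgrad.
have -> : (fun s => l (net sigma b a (pupd th i r k s) x)) = phi \o H.
  by apply/funext => s; rewrite /= net_pupd.
have dH : is_derive (0:R) (1:R) H (b^-1 * (a i r * (derive1 sigma u * x k))).
  apply: is_deriveZ1; apply: is_deriveZ1.
  have := is_derive_sig u (x k) 0 ds; rewrite mul0r addr0 => Hs.
  have [H1 H2] := is_deriveB Hs (is_derive_cst (sigma u) (0:R) (1:R)).
  by split; [exact: H1| rewrite [LHS]H2 subr0].
have H0 : H 0 = 0 by rewrite /H mul0r addr0 subrr !mulr0.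
have dphi : derivable phi (H 0) 1.
  by rewrite H0; exact ((derivable1P l y e).1 (@diff_derivable _ _ _ l y e dl)).
rewrite (@derive1_comp _ H phi 0); last 2 first.
- by case: dH.
- exact: dphi.
rewrite H0 [derive1 H 0]derive1E; case: dH => _ ->.
congr (_ * _).
rewrite derive1E -(@deriveE _ _ _ l y e dl).
rewrite /derive; congr lim.
have -> : (fun h : R => h^-1 *: ((phi \o shift 0) h%:A - phi 0)) =
  (fun h : R => h^-1 *: ((l \o shift y) (h *: e) - l y)).
  by apply/funext => h; rewrite /phi /= scale0r add0r addr0 [h%:A]mulr1.
by [].
Qed.
Lemma dlin (R : realType) (d : nat) (l : 'rV[R]_d -> R) (y v : 'rV[R]_d) :
  'd l y v = \sum_(i < d) v ord0 i * 'd l y (delta_mx 0 i).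
Proof.
rewrite {1}(row_sum_delta v) linear_sum; apply: eq_bigr => i _.
by rewrite linearZ.
Qed.
Lemma cs1 (R : realType) (p : nat) (dl x : 'I_p -> R) :
  \sum_(k < p) x k ^+ 2 = 1 -> (\sum_(k < p) dl k * x k) ^+ 2 <= \sum_(k < p) dl k ^+ 2.
Proof.
move=> hx; set c := \sum_(k < p) dl k * x k.
have : 0 <= \sum_(k < p) (dl k - c * x k) ^+ 2 by apply: sumr_ge0 => k _; exact: sqr_ge0.
have -> : \sum_(k < p) (dl k - c * x k) ^+ 2 =
  \sum_(k < p) (dl k ^+ 2 + (- (2 * c)) * (dl k * x k) + c ^+ 2 * x k ^+ 2).
  by apply: eq_bigr => k _; ring.
rewrite !big_split /= -!mulr_sumr hx -/c; lra.
Qed.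

Lemma step_bound (R : realType) (d m p : nat) (sigma : R -> R) (b C L : R)
  (a : 'I_d -> 'I_m -> R) (th ths : param R d m p) (x : 'I_p -> R)
  (c : 'I_d -> R) (l : 'rV[R]_d -> R) :
  0 < b -> 0 <= C ->
  (forall z : R, derivable sigma z 1) ->
  (forall z z' : R, `|derive1 sigma z - derive1 sigma z'| <= C * `|z - z'|) ->
  (forall i r, a i r = 1 \/ a i r = -1) ->
  \sum_(k < p) x k ^+ 2 = 1 ->
  (forall z, \sum_(i < d) (z - net sigma b a th x) ord0 i * c i <= l z - l (net sigma b a th x)) ->
  (forall i, `|c i| <= L) ->
  l (net sigma b a th x) - l (net sigma b a ths x) <=
  S3 (fun i r k => c i * (b^-1 * (a i r * (derive1 sigma (\sum_(k' < p) th i r k' * x k') * x k)))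
                   * (th i r k - ths i r k))
  + L * (C / 2 / b) * NN (psub th ths).
Proof.
move=> b0 C0 ds Lip ha hx Q1 cL.
set u := fun i r => \sum_(k' < p) th i r k' * x k'.
set us := fun i r => \sum_(k' < p) ths i r k' * x k'.
have H1 := Q1 (net sigma b a ths x).
have E : forall i, (net sigma b a ths x - net sigma b a th x) ord0 i * c i =
   - (c i * (b^-1 * \sum_(r < m) a i r * (derive1 sigma (u i r) * (u i r - us i r))))
   - (c i * (b^-1 * \sum_(r < m) a i r * (sigma (u i r) - sigma (us i r) - derive1 sigma (u i r) * (u i r - us i r)))).
  move=> i; rewrite !mxE -/(u i) -/(us i).
  have -> : \sum_(r < m) a i r * sigma (\sum_(k < p) th i r k * x k) = \sum_(r < m) a i r * sigma (u i r) by [].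
  have -> : \sum_(r < m) a i r * sigma (\sum_(k < p) ths i r k * x k) = \sum_(r < m) a i r * sigma (us i r) by [].
  have -> : \sum_(r < m) a i r * sigma (u i r) = \sum_(r < m) a i r * (derive1 sigma (u i r) * (u i r - us i r))
     + \sum_(r < m) a i r * (sigma (u i r) - sigma (us i r) - derive1 sigma (u i r) * (u i r - us i r))
     + \sum_(r < m) a i r * sigma (us i r).
    rewrite -!big_split /=; apply: eq_bigr => r _; ring.
  ring.
have hu : forall i r, u i r - us i r = \sum_(k < p) (th i r k - ths i r k) * x k.
  move=> i r; rewrite /u /us -sumrB; apply: eq_bigr => k _; ring.
have A : \sum_(i < d) c i * (b^-1 * \sum_(r < m) a i r * (derive1 sigma (u i r) * (u i r - us i r)))
  = S3 (fun i r k => c i * (b^-1 * (a i r * (derive1 sigma (\sum_(k' < p) th i r k' * x k') * x k)))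
                   * (th i r k - ths i r k)).
  rewrite /S3; apply: eq_bigr => i _; rewrite !mulr_sumr; apply: eq_bigr => r _.
  rewrite hu !mulr_sumr; apply: eq_bigr => k _; rewrite /u; ring.
have B : \sum_(i < d) c i * (b^-1 * \sum_(r < m) a i r * (sigma (u i r) - sigma (us i r) - derive1 sigma (u i r) * (u i r - us i r)))
   <= L * (C / 2 / b) * NN (psub th ths).
  rewrite /NN /S3 mulr_sumr; apply: ler_sum => i _.
  set Z := b^-1 * _.
  have L0 : 0 <= L by apply: le_trans (cL i); exact: normr_ge0.
  apply: le_trans (ler_norm _) _; rewrite normrM.
  apply: le_trans (_ : L * `|Z| <= _); first by apply: ler_wpM2r => //; exact: normr_ge0.
  rewrite -mulrA; apply: ler_wpM2l => //.
  rewrite /Z normrM gtr0_norm ?invr_gt0 // [C / 2 / b]mulrC -mulrA.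
  apply: ler_wpM2l; first by rewrite invr_ge0 ltW.
  rewrite mulr_sumr; apply: le_trans (ler_norm_sum _ _ _) _; apply: ler_sum => r _.
  rewrite normrM.
  have -> : `|a i r| = 1 by case: (ha i r) => ->; rewrite ?normrN normr1.
  rewrite mul1r.
  have T := taylor ds Lip (u i r) (us i r).
  have -> : `|sigma (u i r) - sigma (us i r) - derive1 sigma (u i r) * (u i r - us i r)|
     = `|sigma (us i r) - sigma (u i r) - derive1 sigma (u i r) * (us i r - u i r)|.
    by rewrite -normrN; congr `|_|; ring.
  apply: le_trans T _.
  have -> : (us i r - u i r) ^+ 2 = (u i r - us i r) ^+ 2 by ring.
  rewrite hu /psub; apply: ler_wpM2l; first by apply: divr_ge0.
  exact: cs1.
rewrite (eq_bigr _ (fun i _ => E i)) sumrB !sumrN in H1.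
rewrite -A; lra.
Qed.
Lemma ogd_core (R : realType) (T : nat) (A ip gn : nat -> R) (K G M : R) :
  0 < K ->
  (forall t, (1 <= t <= T)%N ->
     A t.+1 <= A t - 2 * (K / Num.sqrt (t%:R)) * ip t + (K / Num.sqrt (t%:R)) ^+ 2 * gn t) ->
  (forall t, (1 <= t <= T)%N -> gn t <= G ^+ 2) ->
  (forall t, (1 <= t <= T)%N -> A t <= M) ->
  0 <= A T.+1 ->
  \sum_(1 <= t < T.+1) ip t <= M * Num.sqrt (T%:R) / (2 * K) + K * G ^+ 2 * Num.sqrt (T%:R).
Proof.
move=> K0 HA Hg HM HT.
have step : forall t, (1 <= t <= T)%N ->
   ip t <= (A t - A t.+1) * Num.sqrt (t%:R) / (2 * K) + K * G ^+ 2 / 2 * (Num.sqrt (t%:R))^-1.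
  move=> t ht; have := HA t ht; have := Hg t ht.
  have st : 0 < Num.sqrt (t%:R : R).
    by rewrite sqrtr_gt0 ltr0n; case/andP: ht.
  set q := Num.sqrt (t%:R : R) in st *.
  set e := K / q => hg ha.
  have e0 : 0 < e by rewrite divr_gt0.
  have : 2 * e * ip t <= A t - A t.+1 + e ^+ 2 * G ^+ 2.
    have : e ^+ 2 * gn t <= e ^+ 2 * G ^+ 2 by apply: ler_wpM2l => //; exact: sqr_ge0.
    lra.
  move=> h.
  have eq1 : (A t - A t.+1) * q / (2 * K) + K * G ^+ 2 / 2 * q^-1
            = (A t - A t.+1 + e ^+ 2 * G ^+ 2) / (2 * e).
    rewrite /e; field; apply/andP; split; rewrite gt_eqF //.
  rewrite eq1 ler_pdivlMr; last by rewrite mulr_gt0.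
  by rewrite mulrC.
apply: le_trans (_ : \sum_(1 <= t < T.+1) ((A t - A t.+1) * Num.sqrt (t%:R) / (2 * K)
       + K * G ^+ 2 / 2 * (Num.sqrt (t%:R))^-1) <= _).
  rewrite big_nat_cond [X in _ <= X]big_nat_cond; apply: ler_sum => t /andP[ht _].
  apply: step; move: ht; rewrite ltnS //.
rewrite big_split /= -!mulr_sumr -mulr_suml.
have t1 := @telescope R T A M HM.
have t2 := @sum_isqrt R T.
have s0 : 0 <= Num.sqrt (T%:R : R) by exact: sqrtr_ge0.
have : 0 <= K * G ^+ 2 / 2 by apply: divr_ge0 => //; apply: mulr_ge0; [exact: ltW| exact: sqr_ge0].
move=> kg.
have i2K : 0 < (2 * K)^-1 by rewrite invr_gt0 mulr_gt0.
set S1 := \sum_(1 <= i < T.+1) _ in t1 *.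
set S2 := \sum_(1 <= i < T.+1) _ in t2 *.
have h1 : S1 / (2 * K) <= (M * Num.sqrt (T%:R) - A T.+1 * Num.sqrt (T%:R)) / (2 * K).
  by rewrite ler_pM2r.
have h2 : K * G ^+ 2 / 2 * S2 <= K * G ^+ 2 / 2 * (2 * Num.sqrt (T%:R)).
  by apply: ler_wpM2l.
have h3 : 0 <= A T.+1 * Num.sqrt (T%:R) / (2 * K) by apply: mulr_ge0; [apply: mulr_ge0|exact: ltW].
have -> : K * G ^+ 2 * Num.sqrt (T%:R) = K * G ^+ 2 / 2 * (2 * Num.sqrt (T%:R)) by field.
rewrite mulrBl in h1.
lra.
Qed.
Lemma sq_le (R : realType) (s L : R) : 0 <= s -> s <= L * Num.sqrt s -> s <= L ^+ 2.
Proof.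
move=> s0 h; have q0 := sqrtr_ge0 s; have qe := sqr_sqrtr s0.
set q := Num.sqrt s in q0 qe h *; rewrite -qe in h *; nra.
Qed.

Lemma grad_norm (R : realType) (d m p : nat) (sigma : R -> R) (b C L : R)
  (a : 'I_d -> 'I_m -> R) (th : param R d m p) (x : 'I_p -> R) (c : 'I_d -> R) :
  0 < b ->
  (forall z : R, `|derive1 sigma z| <= C) ->
  (forall i r, a i r = 1 \/ a i r = -1) ->
  \sum_(k < p) x k ^+ 2 = 1 ->
  \sum_(i < d) c i ^+ 2 <= L ^+ 2 ->
  NN (fun i r k => c i * (b^-1 * (a i r * (derive1 sigma (\sum_(k' < p) th i r k' * x k') * x k))))
   <= (C * L * Num.sqrt (m%:R) / b) ^+ 2.
Proof.
move=> b0 Bd ha hx hc.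
rewrite /NN /S3.
have -> : (C * L * Num.sqrt (m%:R) / b) ^+ 2 = (C ^+ 2 * m%:R / b ^+ 2) * L ^+ 2.
  rewrite !exprMn sqr_sqrtr ?ler0n // exprVn; ring.
have K0 : 0 <= C ^+ 2 * m%:R / b ^+ 2.
  by apply: mulr_ge0; [apply: mulr_ge0; [exact: sqr_ge0|exact: ler0n]|rewrite invr_ge0 sqr_ge0].
apply: le_trans (_ : \sum_(i < d) (C ^+ 2 * m%:R / b ^+ 2) * c i ^+ 2 <= _); last first.
  by rewrite -mulr_sumr; apply: ler_wpM2l.
apply: ler_sum => i _.
apply: le_trans (_ : \sum_(r < m) (c i ^+ 2 / b ^+ 2 * C ^+ 2) <= _); last first.
  rewrite sumr_const card_ord -mulr_natr le_eqVlt; apply/orP; left; apply/eqP; field.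
  by rewrite gt_eqF // exprn_gt0.
apply: ler_sum => r _.
set D := derive1 sigma _.
have -> : \sum_(k < p) (c i * (b^-1 * (a i r * (D * x k)))) ^+ 2 =
   c i ^+ 2 / b ^+ 2 * (a i r ^+ 2 * D ^+ 2) * \sum_(k < p) x k ^+ 2.
  rewrite mulr_sumr; apply: eq_bigr => k _; rewrite -exprVn; ring.
have -> : a i r ^+ 2 = 1 by case: (ha i r) => ->; ring.
rewrite hx mulr1 mul1r; apply: ler_wpM2l.
  by apply: mulr_ge0; [exact: sqr_ge0|rewrite invr_ge0 sqr_ge0].
have := Bd (\sum_(k' < p) th i r k' * x k'); rewrite -/D => hD.
have n0 := normr_ge0 D; rewrite -real_normK ?num_real //; nra.
Qed.

Lemma NN_ball (R : realType) (d m p : nat) (th1 u v : param R d m p) (Rad : R) :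
  0 <= Rad -> inBall th1 Rad u -> inBall th1 Rad v -> NN (psub u v) <= 4 * Rad ^+ 2.
Proof.
move=> R0; rewrite /inBall !frob_le_rad // => hu hv.
apply: le_trans (_ : 2 * NN (psub u th1) + 2 * NN (psub v th1) <= _); last lra.
rewrite /NN -!S3Z -S3D; apply: S3_le => i j k; rewrite /psub.
have : 0 <= (u i j k + v i j k - 2 * th1 i j k) ^+ 2 by exact: sqr_ge0.
move=> h; rewrite le_eqVlt in h; nra.
Qed.

Lemma pstep_expand (R : realType) (d m p : nat) (th g thc : param R d m p) (e : R) :
  NN (psub (pstep th e g) thc) =
  NN (psub th thc) - 2 * e * S3 (fun i r k => g i r k * (th i r k - thc i r k)) + e ^+ 2 * NN g.
Proof.
rewrite /NN.
have -> : S3 (fun i r k => psub (pstep th e g) thc i r k ^+ 2) =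
  S3 (fun i r k => (psub th thc i r k ^+ 2 + (- (2 * e)) * (g i r k * (th i r k - thc i r k)))
                   + e ^+ 2 * g i r k ^+ 2).
  by apply: S3_ext => i r k; rewrite /psub /pstep; ring.
rewrite !S3D !S3Z; ring.
Qed.
Lemma frob_self (R : realType) (d m p : nat) (th : param R d m p) : frob (psub th th) = 0.
Proof.
rewrite frobE /NN.
have -> : S3 (fun i r k => psub th th i r k ^+ 2) = S3 (fun (i : 'I_d) (r : 'I_m) (k : 'I_p) => 0 * 0 : R).
  by apply: S3_ext => i r k; rewrite /psub subrr expr2.
by rewrite S3Z mul0r sqrtr0.
Qed.


Unset Implicit Arguments.

Theorem mainTheorem4 (R : realType) (p d m : nat) (b C L Rad : R)
  (sigma : R -> R) (a : 'I_d -> 'I_m -> R) (th1 : param R d m p)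
  (T : nat) (x : nat -> 'I_p -> R) (l : nat -> 'rV[R]_d -> R)
  (th : nat -> param R d m p) :
  (0 < p)%N -> (0 < d)%N -> (0 < m)%N -> ~~ odd m ->
  0 < b -> 0 < C -> 0 < Rad ->
  (* sigma differentiable, sigma' C-Lipschitz and bounded by C *)
  (forall z : R, derivable sigma z 1) ->
  (forall z z' : R, `|derive1 sigma z - derive1 sigma z'| <= C * `|z - z'|) ->
  (forall z : R, `|derive1 sigma z| <= C) ->
  (* fixed signs: a i r in {1,-1} and bar-a = -a on the second half *)
  (forall i r, a i r = 1 \/ a i r = -1) ->
  (forall i (r r' : 'I_m), val r = (val r' + m./2)%N -> a i r = - a i r') ->
  (* initialization: bar-theta_1[i,r] = theta_1[i,r] *)
  (forall i (r r' : 'I_m), val r = (val r' + m./2)%N -> th1 i r = th1 i r') ->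
  (* inputs on the unit sphere *)
  (forall t, (1 <= t <= T)%N -> \sum_(k < p) (x t k) ^+ 2 = 1) ->
  (* losses convex, differentiable, L-Lipschitz *)
  (forall t, (1 <= t <= T)%N ->
     [/\ convex_fun (l t), (forall y, differentiable (l t) y)
       & lipschitz_eucl L (l t)]) ->
  (* Algorithm 1 *)
  th 1%N = th1 ->
  (forall t, (1 <= t <= T)%N ->
     is_proj th1 Rad
       (pstep (th t)
          (2 * Rad * b / (C * L * Num.sqrt (m%:R)) / Num.sqrt (t%:R))
          (pgrad (fun th' => l t (net sigma b a th' (x t))) (th t)))
       (th t.+1)) ->
  forall thc : param R d m p, inBall th1 Rad thc ->
  \sum_(1 <= t < T.+1) l t (net sigma b a (th t) (x t))
  <= \sum_(1 <= t < T.+1) l t (net sigma b a thc (x t))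
     + 3 * C * L * Rad * Num.sqrt (m%:R * T%:R) / b
     + 2 * C * L * Rad ^+ 2 / b * T%:R.

Proof.
move=> hp hd hm hodd b0 C0 R0 ds Lip Bd ha hbar hinit hx hl h1 hproj thc hthc.
have [->|T0] := eqVneq T 0%N.
  by rewrite !big_geq // !(mulr0, sqrtr0, mul0r, addr0).
have R0' := ltW R0.
have T1 : (1 <= 1 <= T)%N by rewrite leqnn lt0n.
have L0 : 0 <= L.
  have [_ _ lp] := hl 1%N T1.
  have := lp (const_mx 1) 0; rewrite subr0.
  have e0 : 0 < eucl (const_mx 1 : 'rV[R]_d).
    rewrite /eucl sqrtr_gt0.
    have -> : \sum_(i < d) (const_mx 1 : 'rV[R]_d) ord0 i ^+ 2 = \sum_(i < d) (1 : R).
      by apply: eq_bigr => i _; rewrite mxE expr1n.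
    by rewrite sumr_const card_ord ltr0n.
  move=> h; have := le_trans (normr_ge0 _) h; rewrite pmulr_lge0 //.
set F := fun t => fun th' : param R d m p => l t (net sigma b a th' (x t)).
set g := fun t => pgrad (F t) (th t).
set ip := fun t => S3 (fun i r k => g t i r k * (th t i r k - thc i r k)).
set A := fun t => NN (psub (th t) thc).
set c := fun t (i : 'I_d) => 'd (l t) (net sigma b a (th t) (x t)) (delta_mx 0 i).
have inB : forall t, (1 <= t <= T.+1)%N -> inBall th1 Rad (th t).
  move=> [|t] //; case: t => [_|t ht]; first by rewrite h1 /inBall frob_self.
  by have [] := hproj t.+1 ht.
have gform : forall t, (1 <= t <= T)%N -> forall i r k,
   g t i r k = c t i * (b^-1 * (a i r * (derive1 sigma (\sum_(k' < p) th t i r k' * x t k') * x t k))).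
  move=> t ht i r k; have [_ dl _] := hl t ht.
  exact: pgrad_formula.
have cL2 : forall t, (1 <= t <= T)%N -> \sum_(i < d) c t i ^+ 2 <= L ^+ 2.
  move=> t ht; have [_ dl lp] := hl t ht.
  apply: sq_le; first by apply: sumr_ge0 => i _; exact: sqr_ge0.
  have := lip_grad (\row_i c t i) lp (dl _).
  move/(_ (net sigma b a (th t) (x t))); rewrite dlin /eucl.
  have -> : \sum_(i < d) (\row_i0 c t i0) ord0 i * 'd (l t) (net sigma b a (th t) (x t)) (delta_mx 0 i)
     = \sum_(i < d) c t i ^+ 2 by apply: eq_bigr => i _; rewrite mxE expr2.
  have -> : \sum_(i < d) (\row_i0 c t i0) ord0 i ^+ 2 = \sum_(i < d) c t i ^+ 2
    by apply: eq_bigr => i _; rewrite mxE.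
  by [].
have cL : forall t, (1 <= t <= T)%N -> forall i, `|c t i| <= L.
  move=> t ht i; have h := cL2 t ht.
  have : c t i ^+ 2 <= \sum_(i < d) c t i ^+ 2.
    rewrite (bigD1 i) //= lerDl; apply: sumr_ge0 => j _; exact: sqr_ge0.
  rewrite -real_normK ?num_real // => h2.
  have := normr_ge0 (c t i); nra.
have stepb : forall t, (1 <= t <= T)%N ->
    l t (net sigma b a (th t) (x t)) - l t (net sigma b a thc (x t))
    <= ip t + L * (C / 2 / b) * NN (psub (th t) thc).
  move=> t ht; have [cv dl _] := hl t ht.
  have Q1 : forall z, \sum_(i < d) (z - net sigma b a (th t) (x t)) ord0 i * c t i
       <= l t z - l t (net sigma b a (th t) (x t)).
    by move=> z; rewrite -dlin; exact: conv_grad.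
  have := @step_bound R d m p sigma b C L a (th t) thc (x t) (c t) (l t) b0 (ltW C0) ds Lip ha (hx t ht) Q1 (cL t ht).
  suff -> : ip t = S3 (fun i r k => c t i * (b^-1 * (a i r * (derive1 sigma (\sum_(k' < p) th t i r k' * x t k') * x t k)))
                   * (th t i r k - thc i r k)) by [].
  by apply: S3_ext => i r k; rewrite gform.
have gn : forall t, (1 <= t <= T)%N -> NN (g t) <= (C * L * Num.sqrt (m%:R) / b) ^+ 2.
  move=> t ht.
  have -> : NN (g t) = NN (fun i r k => c t i * (b^-1 * (a i r * (derive1 sigma (\sum_(k' < p) th t i r k' * x t k') * x t k)))).
    by apply: S3_ext => i r k; rewrite gform.
  exact: grad_norm b0 Bd ha (hx t ht) (cL2 t ht).
have Ast : forall t, (1 <= t <= T)%N ->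
   A t.+1 <= A t - 2 * (2 * Rad * b / (C * L * Num.sqrt (m%:R)) / Num.sqrt (t%:R)) * ip t
     + (2 * Rad * b / (C * L * Num.sqrt (m%:R)) / Num.sqrt (t%:R)) ^+ 2 * NN (g t).
  move=> t ht; have := proj_nonexp R0 (hproj t ht) hthc.
  by rewrite pstep_expand.
have AM : forall t, (1 <= t <= T.+1)%N -> A t <= 4 * Rad ^+ 2.
  by move=> t ht; exact: NN_ball R0' (inB t ht) hthc.
have sm : 0 < Num.sqrt (m%:R : R) by rewrite sqrtr_gt0 ltr0n.
have Sip : \sum_(1 <= t < T.+1) ip t <= 3 * C * L * Rad * Num.sqrt (m%:R * T%:R) / b.
  rewrite sqrtrM ?ler0n //.
  have [L00|Lp] : L = 0 \/ 0 < L.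
    by move: L0; rewrite le_eqVlt => /orP[/eqP<-|->]; [left|right].
    rewrite L00 !mulr0 !mul0r big_nat_cond big1 // => t /andP[ht _].
    rewrite /ip.
    have -> : S3 (fun i r k => g t i r k * (th t i r k - thc i r k)) =
        S3 (fun (i : 'I_d) (r : 'I_m) (k : 'I_p) => 0 * 0 : R).
      apply: S3_ext => i r k; rewrite gform //.
      have : `|c t i| <= 0 by rewrite -L00; exact: cL.
      rewrite normr_le0 => /eqP ->; ring.
    by rewrite S3Z mul0r.
  have K0 : 0 < 2 * Rad * b / (C * L * Num.sqrt (m%:R)).
    by apply: divr_gt0; apply: mulr_gt0 => //; apply: mulr_gt0.
  have := @ogd_core R T A ip (fun t => NN (g t)) (2 * Rad * b / (C * L * Num.sqrt (m%:R)))
     (C * L * Num.sqrt (m%:R) / b) (4 * Rad ^+ 2) K0 Ast gn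
     (fun t ht => AM t (ltac:(case/andP: ht => h1' h2'; rewrite h1' /=; exact: leqW))) (NN_ge0 _).
  move=> H; apply: le_trans H _.
  rewrite le_eqVlt; apply/orP; left; apply/eqP.
  field; rewrite !gt_eqF //.
have Sl : \sum_(1 <= t < T.+1) l t (net sigma b a (th t) (x t)) <=
    \sum_(1 <= t < T.+1) (l t (net sigma b a thc (x t)) + ip t + L * (C / 2 / b) * (4 * Rad ^+ 2)).
  rewrite big_nat_cond [X in _ <= X]big_nat_cond; apply: ler_sum => t /andP[ht _].
  have := stepb t ht.
  have : L * (C / 2 / b) * NN (psub (th t) thc) <= L * (C / 2 / b) * (4 * Rad ^+ 2).
    apply: ler_wpM2l; last exact: NN_ball R0' (inB t (ltac:(case/andP: ht => h1' h2'; rewrite h1' /=; exact: leqW))) hthc.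
    apply: mulr_ge0 => //; apply: divr_ge0; last exact: ltW.
    by apply: divr_ge0; [exact: ltW|exact: ler0n].
  lra.
rewrite !big_split /= sumr_const_nat subn1 /= in Sl.
apply: le_trans Sl _.
have -> : (L * (C / 2 / b) * (4 * Rad ^+ 2)) *+ T = 2 * C * L * Rad ^+ 2 / b * T%:R.
  rewrite -mulr_natr; field; rewrite gt_eqF //.
lra.
Qed.
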